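(* Let $n\ge1$ and let $G$ be a nontrivial compact group with trivial center. Then $d^{(n)}(G)\le\frac{2^n-1}{2^n}$.
   Context: For a compact group $X$, $\mu_X$ denotes its normalized Haar measure and $\mu_X^m$ the product measure on $X^m$. Commutators: $[x,y]=x^{-1}y^{-1}xy$, $[x_1,\dots,x_{k+1}]=[[x_1,\dots,x_k],x_{k+1}]$. For a compact group $X$, $d^{(n)}(X)=\mu_X^{n+1}(\{(x_1,\dots,x_{n+1})\in X^{n+1}: [x_1,\dots,x_{n+1}]=1\})$. *)

(* Defs.v *)
From HB Require Import structures.
From mathcomp Require Import all_boot all_order all_algebra.
From mathcomp Require Import all_classical all_reals all_analysis.
Set Implicit Arguments. Unset Strict Implicit. Unset Printing Implicit Defensive.
Import Order.TTheory GRing.Theory Num.Theory.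
Local Open Scope classical_set_scope.
Local Open Scope ring_scope.

Definition borel (X : topologicalType) : set (set X) := <<s open >>.

Record compact_group (G : topologicalType) (mul : G -> G -> G) (inv : G -> G)
    (e : G) : Prop := CompactGroup {
  cg_mulA : associative mul;
  cg_mul1 : left_id e mul;
  cg_mulV : forall x, mul (inv x) x = e;
  cg_hausdorff : hausdorff_space G;
  cg_compact : compact [set: G];
  cg_mul_cont : continuous (fun p : G * G => mul p.1 p.2);
  cg_inv_cont : continuous inv }.

Record haar_probability (R : realType) (X : topologicalType)
    (mul : X -> X -> X) (mu : set X -> \bar R) : Prop := HaarProbability {
  haar0 : mu set0 = 0%E;
  haar_ge0 : forall A, borel A -> (0 <= mu A)%E;
  haar_sigma_additive : forall F : nat -> set X,
    (forall i, borel (F i)) -> trivIset setT F ->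
    (fun k => \sum_(0 <= i < k) mu (F i))%E @ \oo --> mu (\bigcup_i F i);
  haarT : mu setT = 1%E;
  haar_left_invariant : forall x A, borel A ->
    mu [set mul x y | y in A] = mu A;
  haar_inner_regular : forall A, borel A ->
    mu A = ereal_sup [set mu K | K in [set K | compact K /\ K `<=` A]] }.

Definition commg (G : Type) (mul : G -> G -> G) (inv : G -> G) (x y : G) : G :=
  mul (mul (mul (inv x) (inv y)) x) y.

Definition itercomm (G : Type) (mul : G -> G -> G) (inv : G -> G) (e : G)
    (s : seq G) : G :=
  match s with
  | [::] => e
  | x :: t => foldl (commg mul inv) x t
  end.

Definition power_group (G : topologicalType) (m : nat) : topologicalType :=
  {ptws 'I_m -> G}.

Definition pmul (G : topologicalType) (m : nat) (mul : G -> G -> G)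
    (f g : power_group G m) : power_group G m := fun i => mul (f i) (g i).

Definition comm_set (G : topologicalType) (mul : G -> G -> G) (inv : G -> G)
    (e : G) (n : nat) : set (power_group G n.+1) :=
  [set x | itercomm mul inv e [seq x i | i <- enum 'I_n.+1] = e].

(* Main.v *)
Require Import Defs.
From HB Require Import structures.
From mathcomp Require Import all_boot all_order all_algebra.
From mathcomp Require Import all_classical all_reals all_analysis.
Import Order.TTheory GRing.Theory Num.Theory.
Local Open Scope classical_set_scope.
Local Open Scope ring_scope.
From mathcomp Require Import all_fingroup.
From mathcomp Require Import ring lra zify.
Set Implicit Arguments. Unset Strict Implicit. Unset Printing Implicit Defensive.
Section GroupAlg.
Context {T : Type} (mul : T -> T -> T) (inv : T -> T) (e : T).
Hypotheses (mulA : associative mul) (mul1 : left_id e mul)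
  (mulV : forall x, mul (inv x) x = e).

Lemma gmulKg x y : mul (inv x) (mul x y) = y.
Proof. by rewrite mulA mulV mul1. Qed.

Lemma gmulgV x : mul x (inv x) = e.
Proof.
have h : mul (mul (inv (inv x)) (inv x)) (mul x (inv x)) = e.
  by rewrite -(mulA (inv (inv x))) (gmulKg x (inv x)) mulV.
by rewrite mulV mul1 in h.
Qed.

Lemma gmulg1 x : mul x e = x.
Proof. by rewrite -(mulV x) mulA gmulgV mul1. Qed.

Lemma gmulgK x y : mul (mul y x) (inv x) = y.
Proof. by rewrite -mulA gmulgV gmulg1. Qed.

Lemma gmulIg x y z : mul x y = mul x z -> y = z.
Proof. by move=> h; rewrite -(gmulKg x y) h gmulKg. Qed.

Lemma gmulgI x y z : mul y x = mul z x -> y = z.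
Proof. by move=> h; rewrite -(gmulgK x y) h gmulgK. Qed.

Lemma gcommgE x y : Defs.commg mul inv x y = e <-> mul x y = mul y x.
Proof.
rewrite /Defs.commg; split=> h.
  have h2 := congr1 (mul (mul y x)) h; rewrite gmulg1 in h2; rewrite -h2.
  rewrite !mulA -(mulA y x) gmulgV gmulg1 gmulgV mul1 //.
by rewrite -mulA h -mulA gmulKg mulV.
Qed.

Lemma gcomm1g y : Defs.commg mul inv e y = e.
Proof. by apply/gcommgE; rewrite mul1 gmulg1. Qed.

End GroupAlg.

Section BorelLemmas.
Context {X : topologicalType}.
Implicit Types A B : set X.

Lemma borel_open A : open A -> borel A.
Proof. by move=> oA; apply: sub_sigma_algebra. Qed.

Lemma borelC A : borel A -> borel (~` A).
Proof. by move=> bA; rewrite -setTD; apply: sigma_algebraCD. Qed.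

Lemma borel_closed A : closed A -> borel A.
Proof. move=> cA; rewrite -[A]setCK; apply: borelC; apply: borel_open.
exact: closed_openC.
Qed.

Lemma borelU A B : borel A -> borel B -> borel (A `|` B).
Proof.
move=> bA bB; rewrite -bigcup2E; apply: sigma_algebra_bigcup => -[|[|i]] //=.
exact: sigma_algebra0.
Qed.

Lemma borelI A B : borel A -> borel B -> borel (A `&` B).
Proof.
move=> bA bB; rewrite -[A `&` B]setCK setCI.
by apply: borelC; apply: borelU; apply: borelC.
Qed.

Lemma borelD A B : borel A -> borel B -> borel (A `\` B).
Proof. by move=> bA bB; apply: borelI => //; apply: borelC. Qed.

Lemma borel0 : borel (set0 : set X).
Proof. exact: sigma_algebra0. Qed.

Lemma borelT : borel (setT : set X).
Proof. by rewrite -setC0; apply: borelC; apply: borel0. Qed.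

End BorelLemmas.

Lemma borel_preimage {X Y : topologicalType} (f : X -> Y) (B : set Y) :
  continuous f -> borel B -> borel (f @^-1` B).
Proof.
move=> cf; apply: (@smallest_sub _ _ _ [set B | borel (f @^-1` B)]).
  split => /=.
  - by rewrite preimage_set0; exact: borel0.
  - move=> A bA /=; rewrite setTD -preimage_setC; exact: borelC.
  - by move=> F bF; rewrite preimage_bigcup; apply: sigma_algebra_bigcup.
by move=> A oA /=; apply: borel_open; apply: open_comp => // x _; apply: cf.
Qed.
Definition Gp (G : topologicalType) (e : G) : Type := G.
HB.instance Definition _ (G : topologicalType) (e : G) := Topological.on (@Gp G e).
HB.instance Definition _ (G : topologicalType) (e : G) := isPointed.Build (@Gp G e) e.
Lemma cov_comp (G : topologicalType) (e : G) (L : set G) : compact L -> cover_compact (L : set (@Gp G e)).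
Proof. by move=> cL; rewrite -(@compact_cover (@Gp G e)). Qed.
Section MeasureLemmas.
Context {R : realType} {X : topologicalType} (mul : X -> X -> X)
  (mu : set X -> \bar R) (Hmu : haar_probability mul mu).
Implicit Types A B : set X.

Lemma mu_finadd (F : nat -> set X) (m : nat) :
  (forall i, borel (F i)) -> trivIset setT F ->
  (forall i, (m <= i)%N -> F i = set0) ->
  mu (\bigcup_i F i) = (\sum_(0 <= i < m) mu (F i))%E.
Proof.
move=> bF tF F0.
have h1 := haar_sigma_additive Hmu bF tF.
have h2 : (fun k => \sum_(0 <= i < k) mu (F i))%E @ \oo --> (\sum_(0 <= i < m) mu (F i))%E.
  apply: cvg_near_cst; exists m => // k /= hk.
  rewrite (@big_cat_nat _ _ _ m) //= [X in (_ + X)%E]big1_seq ?adde0 //.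
  move=> i /andP[_]; rewrite mem_iota subnKC // => /andP[hi _].
  by rewrite F0 // (haar0 Hmu).
exact: (cvg_unique _ h1 h2).
Qed.

Lemma mu_add2 A B : borel A -> borel B -> A `&` B = set0 ->
  mu (A `|` B) = (mu A + mu B)%E.
Proof.
move=> bA bB AB.
rewrite -bigcup2E (@mu_finadd _ 2).
- by rewrite big_nat_recr //= big_nat_recr //= big_nil add0e.
- by move=> [|[|i]] //=; exact: borel0.
- by rewrite -trivIset_bigcup2.
- by move=> [|[|i]].
Qed.

Lemma mu_fin A : borel A -> mu A \is a fin_num.
Proof.
move=> bA; rewrite ge0_fin_numE ?(haar_ge0 Hmu) //.
have : (mu A <= mu setT)%E.
  rewrite -(setUv A) mu_add2 //; last by rewrite setICr.
    by rewrite leeDl // (haar_ge0 Hmu) //; apply: borelC.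
  exact: borelC.
by rewrite (haarT Hmu) => /le_lt_trans; apply; rewrite ltry.
Qed.

Definition m A : R := fine (mu A).

Lemma muE A : borel A -> mu A = (m A)%:E.
Proof. by move=> bA; rewrite /m fineK // mu_fin. Qed.

Lemma m_ge0 A : borel A -> 0 <= m A.
Proof. by move=> bA; rewrite -lee_fin -muE // (haar_ge0 Hmu). Qed.

Lemma m_add A B : borel A -> borel B -> A `&` B = set0 ->
  m (A `|` B) = m A + m B.
Proof.
move=> bA bB AB; apply/eqP; rewrite -eqe EFinD -!muE //; last exact: borelU.
by rewrite mu_add2.
Qed.

Lemma mT : m setT = 1.
Proof. by rewrite /m (haarT Hmu). Qed.

Lemma m_set0 : m set0 = 0.
Proof. by rewrite /m (haar0 Hmu). Qed.

Lemma mC A : borel A -> m (~` A) = 1 - m A.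
Proof.
move=> bA; rewrite -mT -(setUv A) m_add //; last by rewrite setICr.
  by rewrite addrAC subrr add0r.
exact: borelC.
Qed.

Lemma m_le A B : borel A -> borel B -> A `<=` B -> m A <= m B.
Proof.
move=> bA bB AB.
have -> : B = A `|` (B `\` A) by rewrite setDUK.
rewrite m_add //.
- by rewrite lerDl; apply: m_ge0; exact: borelD.
- exact: borelD.
- by rewrite setDIK.
Qed.

Lemma m_le1 A : borel A -> m A <= 1.
Proof. by move=> bA; rewrite -mT; apply: m_le => //; exact: borelT. Qed.

Lemma m_sum (F : nat -> set X) (k : nat) :
  (forall i, borel (F i)) -> trivIset setT F ->
  (forall i, (k <= i)%N -> F i = set0) ->
  m (\bigcup_i F i) = \sum_(0 <= i < k) m (F i).
Proof.
move=> bF tF F0; apply/eqP; rewrite -eqe -muE; last exact: sigma_algebra_bigcup.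
rewrite (mu_finadd bF tF F0) -sumEFin; apply/eqP/eq_bigr => i _; exact: muE.
Qed.

End MeasureLemmas.
Section PowerSetup.
Context {R : realType} {G : topologicalType} (mul : G -> G -> G) (inv : G -> G)
  (e : G) (HG : compact_group mul inv e) (n : nat).

Local Notation X := (power_group G n.+1).

Let mulA := cg_mulA HG.
Let mul1 := cg_mul1 HG.
Let mulV := cg_mulV HG.

Fixpoint cc (k : nat) (x : X) : G :=
  match k with
  | 0 => x (inord 0)
  | k'.+1 => Defs.commg mul inv (cc k' x) (x (inord k'.+1))
  end.

Definition PP k : set X := [set x | cc k x = e].

Lemma cont_proj (i : 'I_n.+1) : continuous (fun x : X => x i).
Proof. exact: (@proj_continuous _ (fun _ : 'I_n.+1 => G) i). Qed.

Lemma cont_mul2 {Y : topologicalType} (f g : Y -> G) :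
  continuous f -> continuous g -> continuous (fun x => mul (f x) (g x)).
Proof.
move=> cf cg x; apply: (@continuous2_cvg _ G G G _ _ f g mul).
- exact: (@cg_mul_cont G mul inv e HG (f x, g x)).
- exact: cf.
- exact: cg.
Qed.

Lemma cont_inv {Y : topologicalType} (f : Y -> G) :
  continuous f -> continuous (fun x => inv (f x)).
Proof. by move=> cf x; apply: continuous_comp; [exact: cf|exact: (@cg_inv_cont G mul inv e HG)]. Qed.

Lemma cont_commg {Y : topologicalType} (f g : Y -> G) :
  continuous f -> continuous g ->
  continuous (fun x => Defs.commg mul inv (f x) (g x)).
Proof.
move=> cf cg; rewrite /Defs.commg.
by do 3 apply: cont_mul2 => //; apply: cont_inv.
Qed.

Lemma cont_cc k : continuous (cc k).
Proof.
elim: k => [|k IH] /=; first exact: cont_proj.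
by apply: cont_commg => //; exact: cont_proj.
Qed.

Lemma closed_e : closed [set e].
Proof. exact/accessible_closed_set1/hausdorff_accessible/(cg_hausdorff HG). Qed.

Lemma borel_pre_e {Y : topologicalType} (f : Y -> G) : continuous f ->
  borel [set x | f x = e].
Proof.
move=> cf; have -> : [set x | f x = e] = f @^-1` [set e] by [].
by apply: borel_preimage => //; apply: borel_closed; exact: closed_e.
Qed.

Lemma borel_pre_pt {Y : topologicalType} (f : Y -> G) (g : G) : continuous f ->
  borel [set x | f x = g].
Proof.
move=> cf; have -> : [set x | f x = g] = f @^-1` [set g] by [].
apply: borel_preimage => //; apply: borel_closed.
exact/accessible_closed_set1/hausdorff_accessible/(cg_hausdorff HG).
Qed.

Lemma open_pre_ne {Y : topologicalType} (f : Y -> G) : continuous f ->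
  open [set x | f x <> e].
Proof.
move=> cf; have -> : [set x | f x <> e] = f @^-1` (~` [set e]) by [].
apply: open_comp; first by move=> x _; exact: cf.
exact/closed_openC/closed_e.
Qed.

Lemma borel_PP k : borel (PP k).
Proof. by apply: (@borel_pre_e _ (cc k)); exact: cont_cc. Qed.

Lemma val_inord_le i : (val (inord i : 'I_n.+1) <= i)%N.
Proof.
rewrite /inord /insubd; case: insubP => [u hu ->|_] //=.
Qed.

Lemma cc_local k (x y : X) : (forall i : 'I_n.+1, (val i <= k)%N -> x i = y i) ->
  cc k x = cc k y.
Proof.
elim: k => [|k IH] h /=; first by apply: h; exact: val_inord_le.
rewrite IH; last by move=> i hi; apply: h; exact: leqW.
by rewrite h //; exact: val_inord_le.
Qed.

Lemma PP_sub k : PP k `<=` PP k.+1.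
Proof. by move=> x; rewrite /PP /= => ->; apply: gcomm1g. Qed.

End PowerSetup.
Section Step.
Context {R : realType} {G : topologicalType} (mul : G -> G -> G) (inv : G -> G)
  (e : G) (HG : compact_group mul inv e) (n : nat)
  (Hcenter : forall z : G, (forall g : G, mul z g = mul g z) -> z = e)
  (mu : set (power_group G n.+1) -> \bar R)
  (Hmu : haar_probability (@pmul G n.+1 mul) mu).

Local Notation X := (power_group G n.+1).
Local Notation c := (@cc G mul inv n).
Local Notation P := (@PP G mul inv e n).
Local Notation m := (m mu).
Local Notation comm := (Defs.commg mul inv).

Let mulA := cg_mulA HG.
Let mul1 := cg_mul1 HG.
Let mulV := cg_mulV HG.

Definition tr (j : nat) (a : G) : X := fun i => if i == inord j then a else e.

Lemma tr_local j a k (y : X) : (k < j <= n)%N ->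
  c k (pmul mul (tr j a) y) = c k y.
Proof.
move=> /andP[kj jn]; apply: cc_local => i hi.
rewrite /pmul /tr; case: eqP => [ij|_]; last by rewrite mul1.
have := leq_ltn_trans hi kj; rewrite ij /= inordK ?ltnS // ltnn //.
Qed.

Lemma tr_at j a (y : X) : pmul mul (tr j a) y (inord j) = mul a (y (inord j)).
Proof. by rewrite /pmul /tr eqxx. Qed.

Lemma tr_inv j a (y : X) : pmul mul (tr j a) (pmul mul (tr j (inv a)) y) = y.
Proof.
apply: funext => i; rewrite /pmul /tr; case: eqP => _.
  by rewrite mulA (gmulgV mulA mul1 mulV) mul1.
by rewrite !mul1.
Qed.

Lemma half_piece j (hj : (0 < j <= n)%N) (Y : set G) (b : G) :
  borel Y -> (forall g, Y g -> comm g b <> e) ->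
  2 * m (P j `&` (c j.-1 @^-1` Y)) <= m (c j.-1 @^-1` Y).
Proof.
move=> bY hY.
have hk : (j.-1 < j <= n)%N by case/andP: hj => j0 jn; rewrite ltn_predL j0 jn.
have jE : j = j.-1.+1 by case/andP: hj => j0 _; rewrite prednK.
set k := j.-1 in hk jE *.
set W := c k @^-1` Y.
set A := P j `&` W.
set t := tr j b.
have bW : borel W by apply: borel_preimage => //; exact: (cont_cc HG).
have bA : borel A by apply: borelI => //; exact: (borel_PP HG).
have PjE : forall y : X, P j y <-> comm (c k y) (y (inord j)) = e.
  by move=> y; rewrite /PP /= jE.
have tA_eq : [set pmul mul t y | y in A] =
    W `&` [set x | comm (c k x) (mul (inv b) (x (inord j))) = e].
  apply/seteqP; split.
  - move=> x [y [Py Wy] <-]; split; first by rewrite /W /= tr_local.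
    by rewrite /= tr_local // tr_at (gmulKg mulA mul1 mulV); apply/PjE.
  - move=> x [Wx Cx]; exists (pmul mul (tr j (inv b)) x); last exact: tr_inv.
    split; last by rewrite /W /= tr_local.
    by apply/PjE; rewrite tr_local // tr_at.
have btA : borel [set pmul mul t y | y in A].
  rewrite tA_eq; apply: borelI => //; apply: (borel_pre_e HG) => //.
  apply: (cont_commg HG) => //; first exact: (cont_cc HG).
  apply: (cont_mul2 HG) => //; first exact: cst_continuous.
  exact: cont_proj.
have mtA : m [set pmul mul t y | y in A] = m A.
  by change (fine (mu [set pmul mul t y | y in A]) = fine (mu A));
    rewrite (haar_left_invariant Hmu t bA).
have disj : A `&` [set pmul mul t y | y in A] = set0.
  apply/seteqP; split => // x [[Px Wx] [y [Py Wy] xE]].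
  have ckE : c k x = c k y by rewrite -xE tr_local.
  have xj : x (inord j) = mul b (y (inord j)) by rewrite -xE tr_at.
  move/PjE: Px; move/PjE: Py; rewrite ckE xj.
  move=> /(gcommgE mulA mul1 mulV) h1 /(gcommgE mulA mul1 mulV) h2.
  apply: (hY (c k y) Wy); apply/(gcommgE mulA mul1 mulV).
  apply: (gmulgI mulA mul1 mulV (x := y (inord j))).
  by rewrite -(mulA (c k y) b) h2 -(mulA b (c k y)) h1 mulA.
have sub : A `|` [set pmul mul t y | y in A] `<=` W.
  move=> x [[_ Wx]//|]; rewrite tA_eq; by case.
have := m_le Hmu (borelU bA btA) bW sub.
rewrite (m_add Hmu) // mtA => h.
by rewrite mulr2n -[X in X * _]/(1 + 1) mulrDl mul1r.
Qed.

Lemma half_cover j (hj : (0 < j <= n)%N) (bs : seq G) (Y : set G) :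
  borel Y -> (forall g, Y g -> exists2 b, b \in bs & comm g b <> e) ->
  2 * m (P j `&` (c j.-1 @^-1` Y)) <= m (c j.-1 @^-1` Y).
Proof.
elim: bs Y => [|b bs IH] Y bY hY.
  have -> : c j.-1 @^-1` Y = set0.
    by apply/seteqP; split => // x /hY [].
  by rewrite setI0 (m_set0 Hmu) mulr0.
set U := [set g | comm g b <> e].
have bU : borel U.
  apply: borel_open; apply: (open_pre_ne HG (f := fun g => comm g b)).
  apply: (cont_commg HG (f := fun g => g) (g := fun _ => b)).
    by move=> x; exact: cvg_id.
  exact: cst_continuous.
have b1 : borel (Y `&` U) by exact: borelI.
have b2 : borel (Y `\` U) by exact: borelD.
have YE : Y = (Y `&` U) `|` (Y `\` U) by rewrite setUIDK.
have cc_cont : continuous (c j.-1) by exact: (cont_cc HG).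
have bp1 : borel (c j.-1 @^-1` (Y `&` U)) by exact: borel_preimage.
have bp2 : borel (c j.-1 @^-1` (Y `\` U)) by exact: borel_preimage.
have bPj : borel (P j) by exact: (borel_PP HG).
have h1 := half_piece hj b1 (fun g hg => proj2 hg).
have h2 : 2 * m (P j `&` (c j.-1 @^-1` (Y `\` U))) <= m (c j.-1 @^-1` (Y `\` U)).
  apply: IH => // g [Yg nUg]; have [b' hb' hc] := hY g Yg.
  move: hb'; rewrite in_cons => /orP[/eqP eb'|hb'].
    by exfalso; apply: nUg; rewrite /U /= -eb'.
  by exists b'.
rewrite YE !preimage_setU setIUr (m_add Hmu) //; last 3 first.
- by apply: borelI.
- by apply: borelI.
- apply/seteqP; split => // x [[_ [_ Ux]] [_ [_ nUx]]]; exact: nUx.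
rewrite (m_add Hmu) //; last first.
  apply/seteqP; split => // x [[_ Ux] [_ nUx]]; exact: nUx.
by rewrite mulrDr; apply: lerD.
Qed.

Lemma hausX : hausdorff_space X.
Proof. exact: (@hausdorff_product _ (fun _ : 'I_n.+1 => G) (fun _ => cg_hausdorff HG)). Qed.

Lemma step j (hj : (0 < j <= n)%N) :
  m (P j) <= m (P j.-1) + (1 - m (P j.-1)) / 2.
Proof.
have jE : j = j.-1.+1 by case/andP: hj => j0 _; rewrite prednK.
set k := j.-1 in jE *.
set Q := ~` P k.
have bPk : borel (P k) by exact: (borel_PP HG).
have bPj : borel (P j) by exact: (borel_PP HG).
have bQ : borel Q by exact: borelC.
have PjE : P j = P k `|` (P j `&` Q).
  apply/seteqP; split=> x; first by case: (pselect (P k x)) => h Px; [left|right].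
  by case=> [Pkx|[]//]; rewrite jE; apply: (PP_sub HG).
have mPj : m (P j) = m (P k) + m (P j `&` Q).
  rewrite {1}PjE (m_add Hmu) //; first exact: borelI.
  by apply/seteqP; split => // x [Pkx [_ nPkx]].
have mQ : m Q = 1 - m (P k) by rewrite (mC Hmu).
suff : m (P j `&` Q) <= m Q / 2 by rewrite mPj -mQ => h; lra.
rewrite leNgt; apply/negP => hlt.
set d := m (P j `&` Q) - m Q / 2.
have d0 : 0 < d by rewrite /d subr_gt0.
have : ((m Q - d)%:E < mu Q)%E by rewrite (muE Hmu bQ) lte_fin ltrBlDr ltrDl.
rewrite (haar_inner_regular Hmu bQ) => /ereal_sup_gt [_ [K [cK KQ] <-] hK].
have bK : borel K by apply: borel_closed; exact: compact_closed hausX cK.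
rewrite (muE Hmu bK) lte_fin in hK.
set L := c k @` K.
have ccont : continuous (c k) by exact: (cont_cc HG).
have cL : compact L by apply: continuous_compact => //; exact: continuous_subspaceT.
have bL : borel L by apply: borel_closed; exact: compact_closed (cg_hausdorff HG) cL.
set U := fun b : G => [set g | comm g b <> e].
have oU : forall b, setT b -> open (U b).
  move=> b _; apply: (open_pre_ne HG (f := fun g => comm g b)).
  apply: (cont_commg HG (f := fun g => g) (g := fun _ => b)).
    by move=> x; exact: cvg_id.
  exact: cst_continuous.
have Lcov : L `<=` cover setT U.
  move=> g [x Kx <-]; have Qx := KQ _ Kx.
  have : ~ (forall b, mul (c k x) b = mul b (c k x)).
    by move=> h; apply: Qx; apply: Hcenter.
  move=> /existsNP [b hb]; exists b => //.
  by move=> /(gcommgE mulA mul1 mulV).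
have cL' := cov_comp (e := e) cL.
have [D' _ hD'] := cL' G setT U oU Lcov.
set W := c k @^-1` L.
have bW : borel W by exact: borel_preimage.
have hW : 2 * m (P j `&` W) <= m W.
  have := @half_cover j hj (finmap.enum_fset D') L bL.
  rewrite -/k -/W; apply => g /hD' [b /= hb hU].
  by exists b.
have KW : K `<=` W by move=> x Kx; exists x.
have WQ : W `<=` Q.
  by move=> x [y Ky yx] Px; apply: (KQ _ Ky); rewrite /PP /= yx.
have mKW := m_le Hmu bK bW KW.
have mPQ : m (P j `&` Q) = m (P j `&` W) + m (P j `&` (Q `\` W)).
  rewrite -(m_add Hmu); [|exact: borelI|apply: borelI => //; exact: borelD|].
    by rewrite -setIUr setDUK.
  by apply/seteqP; split => // x [[_ Wx] [_ [_ nWx]]].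
have mQW : m Q = m W + m (Q `\` W).
  rewrite -(m_add Hmu) //; [by rewrite setDUK|exact: borelD|].
  by apply/seteqP; split => // x [Wx [_ nWx]].
have mle : m (P j `&` (Q `\` W)) <= m (Q `\` W).
  by apply: (m_le Hmu); [apply: borelI => //; exact: borelD|exact: borelD|move=> x []].
have : m (P j `&` Q) < m Q / 2 + d / 2 by lra.
rewrite /d; lra.
Qed.

End Step.
Section Final.
Context {R : realType} {G : topologicalType} (mul : G -> G -> G) (inv : G -> G)
  (e : G) (HG : compact_group mul inv e) (n : nat)
  (Hcenter : forall z : G, (forall g : G, mul z g = mul g z) -> z = e)
  (mu : set (power_group G n.+1) -> \bar R)
  (Hmu : haar_probability (@pmul G n.+1 mul) mu).

Local Notation X := (power_group G n.+1).
Local Notation c := (@cc G mul inv n).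
Local Notation P := (@PP G mul inv e n).
Local Notation m := (m mu).
Local Notation comm := (Defs.commg mul inv).

Let mulA := cg_mulA HG.
Let mul1 := cg_mul1 HG.
Let mulV := cg_mulV HG.

Lemma m_translate0 (g : G) :
  m [set x : X | x (inord 0) = g] = m (P 0).
Proof.
have -> : [set x : X | x (inord 0) = g] = [set pmul mul (tr e 0 g) y | y in P 0].
  apply/seteqP; split => x.
    move=> hx; exists (pmul mul (tr e 0 (inv g)) x); last exact: (tr_inv HG).
    by rewrite /PP /= (tr_at mul) hx mulV.
  move=> [y Py <-]; move: Py; rewrite /PP /= => Py.
  by rewrite (tr_at mul) Py (gmulg1 mulA mul1 mulV).
change (fine (mu [set pmul mul (tr e 0 g) y | y in P 0]) = fine (mu (P 0))).
by rewrite (haar_left_invariant Hmu) //; exact: (borel_PP HG).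
Qed.

Lemma P0_infinite : ~ finite_set [set: G] -> m (P 0) = 0.
Proof.
move=> inf.
have bP0 : borel (P 0) by exact: (borel_PP HG).
have ge0 := m_ge0 Hmu bP0.
apply/eqP; rewrite eq_le ge0 andbT; rewrite leNgt; apply/negP => gt0.
set M := (Num.truncn (1 / m (P 0))).+1.
have hM : 1 / m (P 0) < M%:R by exact: truncnS_gt.
have [B _ hB] := infinite_set_fset M inf.
set s := take M (finmap.enum_fset B).
have us : uniq s by apply: take_uniq; exact: finmap.fset_uniq.
have ss : size s = M by rewrite size_take; case: ltnP hB => // h1 h2; apply/eqP; rewrite eqn_leq h1 h2.
set F := fun i => if (i < M)%N then [set x : X | x (inord 0) = nth e s i] else set0.
have bF : forall i, borel (F i).
  move=> i; rewrite /F; case: ifP => _; last exact: borel0.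
  by apply: (borel_pre_pt HG); exact: cont_proj.
have tF : trivIset setT F.
  apply: ltn_trivIset => i j ij; rewrite /F.
  case: ifP => hi; last by rewrite set0I.
  case: ifP => hj; last by rewrite setI0.
  apply/seteqP; split => // x [/= h1 h2].
  move: h1; rewrite h2 => /eqP; rewrite nth_uniq ?ss // => /eqP ji.
  by move: ij; rewrite ji ltnn.
have F0 : forall i, (M <= i)%N -> F i = set0.
  by move=> i hi; rewrite /F ltnNge hi.
have := m_le1 Hmu (sigma_algebra_bigcup bF).
rewrite (m_sum Hmu bF tF F0).
rewrite (eq_big_nat _ _ (F2 := fun _ => m (P 0))); last first.
  by move=> i /andP[_ hi]; rewrite /F hi m_translate0.
rewrite sumr_const_nat subn0 => h.
have : 1 < M%:R * m (P 0).
  by move: hM; rewrite ltr_pdivrMr // mul1r.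
by rewrite mulr_natl; lra.
Qed.

End Final.
Section Combine.
Context {R : realType} {G : topologicalType} (mul : G -> G -> G) (inv : G -> G)
  (e : G) (HG : compact_group mul inv e) (n : nat)
  (Hcenter : forall z : G, (forall g : G, mul z g = mul g z) -> z = e)
  (mu : set (power_group G n.+1) -> \bar R)
  (Hmu : haar_probability (@pmul G n.+1 mul) mu).

Local Notation X := (power_group G n.+1).
Local Notation c := (@cc G mul inv n).
Local Notation P := (@PP G mul inv e n).
Local Notation m := (m mu).

Lemma iter_bound : (1 <= n)%N -> m (P 1) <= 1 / 2 ->
  forall j, (1 <= j <= n)%N -> m (P j) <= 1 - (2 ^+ j)^-1.
Proof.
move=> n1 h1; elim=> [//|j IH] /andP[j0 jn].
case: (posnP j) => [->|jpos]; first by rewrite expr1; lra.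
have := step HG Hcenter Hmu (j := j.+1); rewrite /= => /(_ jn) hs.
have := IH; rewrite jpos /= ltnW // => /(_ isT) hj.
rewrite exprS invfM.
have p0 : 0 < (2 ^+ j)^-1 :> R by rewrite invr_gt0 exprn_gt0.
lra.
Qed.

Lemma cc_foldl k (x : X) :
  foldl (Defs.commg mul inv) (x (inord 0)) [seq x (inord i) | i <- iota 1 k] = c k x.
Proof.
elim: k => [//|k IH].
by rewrite -[k.+1]addn1 iotaD map_cat foldl_cat IH /= add1n addn1.
Qed.

Lemma comm_setE : @comm_set G mul inv e n = P n.
Proof.
apply/seteqP; split=> x; rewrite /comm_set /PP /=;
  have -> : [seq x i | i <- enum 'I_n.+1] = [seq x (inord i) | i <- iota 0 n.+1]
    by rewrite -val_enum_ord -map_comp; apply: eq_map => i /=; rewrite inord_val.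
  by rewrite /= cc_foldl.
by rewrite /= cc_foldl.
Qed.

End Combine.
Section GroupCount.
Local Close Scope classical_set_scope.
Local Open Scope group_scope.
Context (gT : finGroupType).
Hypotheses (Hc : forall z : gT, (forall g : gT, commute z g) -> z = 1)
  (Hnt : exists g : gT, g != 1).

Local Notation GG := [set: gT].

Lemma classes_bound : (2 * #|classes GG| <= #|gT|)%N.
Proof.
have sumC := sum_card_class GG.
rewrite cardsT in sumC.
have k1 : #|classes GG| = (\sum_(C in classes GG | C != 1%g) 1).+1.
  by rewrite -sum1_card (bigD1 1) ?classes1 //= add1n.
have Cge : forall C, C \in classes GG -> C != 1 ->
    (2 <= #|C|)%N /\ (#|C| %| #|gT|)%N.
  move=> C /imsetP[x _ ->] nC; split; last first.
    by rewrite -index_cent1 -cardsT dvdn_indexg.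
  rewrite ltnNge; apply/negP => hle.
  have : (0 < #|x ^: GG|)%N by apply/card_gt0P; exists x; exact: class_refl.
  move=> h0; have h1 : #|x ^: GG| = 1%N by apply/eqP; rewrite eqn_leq hle h0.
  have [y hy] : exists y, x ^: GG = [set y] by apply/cards1P; rewrite h1.
  have xy : x = y by apply/set1P; rewrite -hy class_refl.
  move: nC; rewrite classG_eq1 => /eqP; apply; apply: Hc => g.
  have : x ^ g \in x ^: GG by apply: imset_f; rewrite inE.
  rewrite hy -xy => /set1P hg.
  by rewrite /commute conjgC hg.
have sumE : #|gT| = (1 + \sum_(C in classes GG | C != 1%g) #|C|)%N.
  by rewrite -sumC (bigD1 1) ?classes1 //= cards1.
set t := \sum_(C in classes GG | C != 1%g) (1:nat) in k1.
have t1 : (1 <= t)%N.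
  have := classes_gt1 GG; rewrite k1 ltnS => ->.
  case: Hnt => g hg; apply/eqP => /setP/(_ g); rewrite !inE.
  by move/negPf: hg => ->.
have h2 : (2 * t <= \sum_(C in classes GG | C != 1%g) #|C|)%N.
  rewrite /t big_distrr /=; apply: leq_sum => C /andP[CC nC].
  by rewrite muln1; case: (Cge C CC nC).
case: (boolP (odd #|gT|)) => oddG.
  have h3 : (3 * t <= \sum_(C in classes GG | C != 1%g) #|C|)%N.
    rewrite /t big_distrr /=; apply: leq_sum => C /andP[CC nC].
    rewrite muln1; case: (Cge C CC nC) => c2 cd.
    have oC : odd #|C|.
      apply: contraTT oddG => eC.
      by rewrite -dvdn2 in eC *; rewrite -dvdn2; exact: dvdn_trans eC cd.
    by move: c2 oC; case: #|C| => [|[|[|]]].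
  rewrite k1; lia.
have : (2 * #|classes GG| != #|gT| + 1)%N.
  apply/eqP => /(congr1 odd); rewrite oddD oddM /= (negPf oddG) //.
rewrite k1; lia.
Qed.

Lemma pair_count :
  #|[set p : gT * gT | p.1 * p.2 == p.2 * p.1]| = (#|classes GG| * #|gT|)%N.
Proof.
have acts : [acts GG, on GG | conjg_action gT] by apply/actsP => x Gx y; rewrite !inE.
have FC := Frobenius_Cauchy acts.
rewrite cardsT in FC.
rewrite -FC -sum1_card.
rewrite (eq_bigl (fun p : gT * gT => true && (p.1 * p.2 == p.2 * p.1))); last first.
  by move=> p; rewrite inE.
rewrite -(pair_big_dep xpredT (fun a b => a * b == b * a) (fun _ _ => 1%N)) /=.
apply: eq_big => [a|a _]; first by rewrite inE.
rewrite -sum1_card; apply: eq_big => // b.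
by rewrite inE afixJ cent_set1 cent1E inE /= eq_sym.
Qed.

Lemma pair_bound :
  (2 * #|[set p : gT * gT | (p.1 * p.2 == p.2 * p.1)%g]| <= #|gT| * #|gT|)%N.
Proof. by rewrite pair_count mulnA leq_mul2r classes_bound orbT. Qed.

End GroupCount.
Record gdata := GData {
  gd_T : choiceType;
  gd_s : seq gd_T;
  gd_mul : gd_T -> gd_T -> gd_T;
  gd_inv : gd_T -> gd_T;
  gd_e : gd_T;
  gd_hs : forall x, x \in gd_s;
  gd_mulA : associative gd_mul;
  gd_mul1 : left_id gd_e gd_mul;
  gd_mulV : forall x, gd_mul (gd_inv x) x = gd_e }.

Definition FG (D : gdata) : Type := seq_sub (gd_s D).
HB.instance Definition _ (D : gdata) := Finite.on (FG D).

Definition fmul (D : gdata) (x y : FG D) : FG D :=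
  SeqSub (@gd_hs D (@gd_mul D (ssval x) (ssval y))).
Definition finv (D : gdata) (x : FG D) : FG D :=
  SeqSub (@gd_hs D (@gd_inv D (ssval x))).
Definition fone (D : gdata) : FG D := SeqSub (@gd_hs D (@gd_e D)).

Lemma fmulA D : associative (@fmul D).
Proof. by move=> x y z; apply: val_inj; rewrite /= gd_mulA. Qed.
Lemma fmul1 D : left_id (@fone D) (@fmul D).
Proof. by move=> x; apply: val_inj; rewrite /= gd_mul1. Qed.
Lemma fmulV D : left_inverse (@fone D) (@finv D) (@fmul D).
Proof. by move=> x; apply: val_inj; rewrite /= gd_mulV. Qed.

HB.instance Definition _ (D : gdata) :=
  Finite_isGroup.Build (FG D) (@fmulA D) (@fmul1 D) (@fmulV D).

Lemma FG_val_mul D (x y : FG D) : ssval (x * y)%g = @gd_mul D (ssval x) (ssval y).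
Proof. by []. Qed.
Lemma FG_val_one D : ssval (1 : FG D)%g = @gd_e D.
Proof. by []. Qed.
Section FiniteCase.
Context {R : realType} {G : topologicalType} (mul : G -> G -> G) (inv : G -> G)
  (e : G) (HG : compact_group mul inv e) (n : nat) (hn : (1 <= n)%N)
  (Hcenter : forall z : G, (forall g : G, mul z g = mul g z) -> z = e)
  (Hnontriv : exists g : G, g <> e)
  (mu : set (power_group G n.+1) -> \bar R)
  (Hmu : haar_probability (@pmul G n.+1 mul) mu).

Local Notation X := (power_group G n.+1).
Local Notation P := (@PP G mul inv e n).
Local Notation m := (m mu).

Let mulA := cg_mulA HG.
Let mul1 := cg_mul1 HG.
Let mulV := cg_mulV HG.

Definition cyl (a b : G) : set X := [set x | x (inord 0) = a /\ x (inord 1) = b].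

Lemma i01 : (inord 0 : 'I_n.+1) != inord 1.
Proof. by apply/eqP => /(congr1 (@nat_of_ord _)); rewrite !inordK. Qed.

Lemma borel_cyl a b : borel (cyl a b).
Proof.
have -> : cyl a b = [set x : X | x (inord 0) = a] `&` [set x : X | x (inord 1) = b] by [].
by apply: borelI; apply: (borel_pre_pt HG); exact: cont_proj.
Qed.

Lemma tr_off j k g (y : X) : (inord k : 'I_n.+1) != inord j ->
  pmul mul (tr e j g) y (inord k) = y (inord k).
Proof. by move=> h; rewrite /pmul /tr (negbTE h) mul1. Qed.

Lemma m_cyl a b : m (cyl a b) = m (cyl e e).
Proof.
have h10 : (inord 1 : 'I_n.+1) != inord 0 by rewrite eq_sym i01.
have E1 : [set pmul mul (tr e 0 a) y | y in cyl e b] = cyl a b.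
  apply/seteqP; split => x.
    move=> [y [y0 y1] <-]; split; first by rewrite (tr_at mul) y0 (gmulg1 mulA mul1 mulV).
    by rewrite tr_off.
  move=> [x0 x1]; exists (pmul mul (tr e 0 (inv a)) x); last exact: (tr_inv HG).
  by split; [rewrite (tr_at mul) x0 mulV|rewrite tr_off].
have E2 : [set pmul mul (tr e 1 b) y | y in cyl e e] = cyl e b.
  apply/seteqP; split => x.
    move=> [y [y0 y1] <-]; split; last by rewrite (tr_at mul) y1 (gmulg1 mulA mul1 mulV).
    by rewrite tr_off // eq_sym.
  move=> [x0 x1]; exists (pmul mul (tr e 1 (inv b)) x); last exact: (tr_inv HG).
  by split; [rewrite tr_off // eq_sym|rewrite (tr_at mul) x1 mulV].
rewrite -E1.
change (fine (mu [set pmul mul (tr e 0 a) y | y in cyl e b]) = fine (mu (cyl e e))).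
rewrite (haar_left_invariant Hmu _ (borel_cyl e b)) -E2.
by rewrite (haar_left_invariant Hmu _ (borel_cyl e e)).
Qed.

Definition unionl (I : Type) (l : seq I) (F : I -> set X) : set X :=
  foldr (fun i A => F i `|` A) set0 l.

Lemma unionlP (I : eqType) (l : seq I) F x :
  unionl l F x <-> exists2 i, i \in l & F i x.
Proof.
elim: l => [|i l IH] /=; first by split => // -[].
split.
  case=> [Fx|/IH [j jl Fj]]; first by exists i; rewrite ?mem_head.
  by exists j => //; rewrite in_cons jl orbT.
move=> [j]; rewrite in_cons => /orP[/eqP->|jl] Fj; first by left.
by right; apply/IH; exists j.
Qed.

Lemma m_unionl (I : eqType) (l : seq I) (F : I -> set X) : uniq l ->
  (forall i, borel (F i)) -> (forall i j, i != j -> F i `&` F j = set0) ->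
  borel (unionl l F) /\ m (unionl l F) = \sum_(i <- l) m (F i).
Proof.
move=> ul bF dF; elim: l ul => [|i l IH] /=.
  by move=> _; rewrite big_nil (m_set0 Hmu); split => //; exact: borel0.
move=> /andP[il ul]; have [bU mU] := IH ul.
split; first exact: borelU.
rewrite big_cons (m_add Hmu) // ?mU //.
apply/seteqP; split => // x [Fix /unionlP [j jl Fjx]].
have ij : i != j by apply: contraNneq il => ->.
by have := dF _ _ ij; move/seteqP => [+ _] => /(_ x (conj Fix Fjx)).
Qed.

Lemma finite_case : finite_set [set: G] -> m (P 1) <= 1 / 2.
Proof.
move=> /finite_seqP [s0 hs0].
set s := undup s0.
have hs : forall x : G, x \in s.
  by move=> x; rewrite mem_undup; have : [set` s0] x by rewrite -hs0.
set D := @GData G s mul inv e hs mulA mul1 mulV.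
pose gT := FG D.
have Hc : forall z : gT, (forall g : gT, commute z g) -> z = 1%g.
  move=> z hz; apply: val_inj; change (ssval z = e); apply: Hcenter => g0.
  have := hz (SeqSub (hs g0)) => /(congr1 (fun w : gT => ssval w)).
  by rewrite !FG_val_mul.
have Hnt : exists g : gT, g != 1%g.
  case: Hnontriv => g0 hg0; exists (SeqSub (hs g0)).
  by apply/eqP => /(congr1 (fun w : gT => ssval w)) h; apply: hg0; exact: h.
have pb := pair_bound Hc Hnt.
set A := (X in (2 * #|X|)%N) in pb.
set F := fun p : gT * gT => cyl (ssval p.1) (ssval p.2).
have bF : forall p, borel (F p) by move=> p; exact: borel_cyl.
have dF : forall p p', p != p' -> F p `&` F p' = set0.
  move=> [a b] [a' b'] neq; apply/seteqP; split=> // x [[h1 h2] [h3 h4]].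
  have ea : a = a' by apply: val_inj; rewrite /= -h1 -h3.
  have eb : b = b' by apply: val_inj; rewrite /= -h2 -h4.
  by move: neq; rewrite ea eb eqxx.
set q := m (cyl e e).
have q0 : 0 <= q by apply: (m_ge0 Hmu); exact: borel_cyl.
have mF : forall p, m (F p) = q by move=> p; exact: m_cyl.
set pt := fun x : X => (SeqSub (hs (x (inord 0))), SeqSub (hs (x (inord 1)))) : gT * gT.
have Fpt : forall x, F (pt x) x by [].
have allE : unionl (enum {: gT * gT}) F = setT.
  apply/seteqP; split => // x _; apply/unionlP; exists (pt x) => //.
  by rewrite mem_enum.
have [_ mAll] := m_unionl (enum_uniq {: gT * gT}) bF dF.
rewrite allE (mT Hmu) big_enum /= (eq_bigr (fun _ => q)) ?sumr_const // in mAll.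
rewrite card_prod in mAll.
have PE : P 1 = unionl (enum A) F.
  apply/seteqP; split => x.
    move=> Px; apply/unionlP; exists (pt x) => //.
    rewrite mem_enum /A inE -val_eqE /=; apply/eqP.
    by move: Px; rewrite /PP /= => /(gcommgE mulA mul1 mulV).
  move=> /unionlP [[a b] pA [h1 h2]]; rewrite /PP /=; apply/(gcommgE mulA mul1 mulV).
  move: pA; rewrite mem_enum /A inE -val_eqE /= => /eqP.
  by rewrite /= h1 h2.
have [_ mP] := m_unionl (enum_uniq A) bF dF.
rewrite -PE big_enum /= (eq_bigr (fun _ => q)) ?sumr_const // in mP.
rewrite mP.
move: pb; set N := (X in (_ <= X * _)%N) => pb.
have pbR : ((2 * #|A|)%N%:R <= (N * N)%N%:R :> R) by rewrite ler_nat.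
have h := ler_wpM2l q0 pbR.
rewrite -mulr_natr in mAll; rewrite -mAll natrM mulrCA in h.
rewrite -mulr_natr; lra.
Qed.

End FiniteCase.
Theorem corollary4p2 (R : realType) (G : topologicalType)
    (mul : G -> G -> G) (inv : G -> G) (e : G) (n : nat)
    (hn : (1 <= n)%N)
    (HG : compact_group mul inv e)
    (Hnontriv : exists g : G, g <> e)
    (Hcenter : forall z : G, (forall g : G, mul z g = mul g z) -> z = e)
    (mu : set (power_group G n.+1) -> \bar R)
    (Hmu : haar_probability (@pmul G n.+1 mul) mu) :
  (mu (@comm_set G mul inv e n) <= ((2 ^+ n - 1) / 2 ^+ n)%:E)%E.
Proof.
have bP : borel (@PP G mul inv e n n) by exact: (borel_PP HG).
rewrite comm_setE (muE Hmu bP) lee_fin.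
have h1 : m mu (@PP G mul inv e n 1) <= 1 / 2.
  case: (pselect (finite_set [set: G])) => fin.
    exact: (finite_case HG hn Hcenter Hnontriv Hmu fin).
  have := step HG Hcenter Hmu (j := 1) hn.
  by rewrite /= (P0_infinite HG Hmu fin); lra.
have := iter_bound HG Hcenter Hmu hn h1 (j := n); rewrite hn leqnn => /(_ isT).
have p0 : 2 ^+ n != 0 :> R by rewrite expf_neq0.
by rewrite mulrBl divff // mul1r.
Qed.
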